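(* Let $\widehat{X}=(\widehat{X}(t))_{t\in[0,1]}$ and $\widehat{Y}=(\widehat{Y}(t))_{t\in[0,1]}$ be independent one-dimensional standard Brownian bridges on $[0,1]$ (Gaussian processes with $\widehat{X}(0)=\widehat{X}(1)=0$, mean zero and $\mathrm{Cov}(\widehat{X}(s),\widehat{X}(t))=s(1-t)$ for $0\le s<t\le 1$), and let $\mu$ be a probability density function supported on $[0,1]$. Define $M_0(t)=\int_0^t\mu(s)\,ds$, $M_1(t)=\int_0^t M_0(s)\,ds$, $M_2(t)=\int_0^t M_1(s)\,ds$. Then the average radius of gyration of the two-dimensional tracked Brownian bridge $(\widehat{X}(t),\widehat{Y}(t))_{t\in\widetilde S}$ in the limit $c\to\infty$, namely $$r^2:=2\,\mathbb{E}\left[\int_0^1 \widehat{X}(t)^2\mu(t)\,dt\right],$$ satisfies $$r^2=2M_1(1)-4M_2(1).$$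
   Context: Tracking setup: $S$ is a non-homogeneous Poisson point process on $[0,1]$ with intensity $\lambda(t)=c\mu(t)$, $c>0$, and $\widetilde S=S\cup\{0,1\}$; the tracked bridge is the set of observed locations $(\widehat{X}(t),\widehat{Y}(t))$, $t\in\widetilde S$. Its gyration tensor about the tether point $(0,0)$ has entries $T_{11}=\frac{1}{2+|S|}\sum_{t\in S}\widehat X(t)^2$, $T_{22}=\frac{1}{2+|S|}\sum_{t\in S}\widehat Y(t)^2$, $T_{12}=\frac{1}{2+|S|}\sum_{t\in S}\widehat X(t)\widehat Y(t)$, and its radius of gyration is $T_{11}+T_{22}$. As $c\to\infty$ these entries are replaced by $\int_0^1\widehat X(t)^2\mu(t)dt$, $\int_0^1\widehat Y(t)^2\mu(t)dt$, $\int_0^1\widehat X(t)\widehat Y(t)\mu(t)dt$, and the limiting average radius of gyration is defined to be $r^2=2\mathbb{E}[\int_0^1\widehat X(t)^2\mu(t)dt]$. *)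

(* Defs.v *)
From HB Require Import structures.
From mathcomp Require Import all_boot all_order all_algebra.
From mathcomp Require Import all_classical all_reals all_analysis.
Set Implicit Arguments. Unset Strict Implicit. Unset Printing Implicit Defensive.
Import Order.TTheory GRing.Theory Num.Theory.
Import numFieldNormedType.Exports.
Local Open Scope classical_set_scope.
Local Open Scope ring_scope.

Section defs.
Context {d : measure_display} {T : measurableType d} {R : realType}.
Variable P : probability T R.

Definition gaussian_rv (Z : T -> R) : Prop :=
  measurable_fun setT Z /\
  exists m s : R,
    (s = 0 /\ forall A, measurable A -> P (Z @^-1` A) = \d_m A) \/
    (s != 0 /\ forall A, measurable A -> P (Z @^-1` A) = normal_prob m s A).

Definition gaussian_process (X : R -> T -> R) : Prop :=
  forall (ts : seq R) (a : nat -> R),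
    (forall i, (i < size ts)%N -> nth 0 ts i \in `[0, 1]) ->
    gaussian_rv (fun w => \sum_(i < size ts) a i * X (nth 0 ts i) w).

Definition brownian_bridge (X : R -> T -> R) : Prop :=
  gaussian_process X /\
  P [set w | X 0 w = 0] = 1%E /\ P [set w | X 1 w = 0] = 1%E /\
  (forall t, t \in `[0, 1] -> ('E_P[X t] = 0)%E) /\
  (forall s t, s \in `[0, 1] -> t \in `[0, 1] -> s <= t ->
     (covariance P (X s) (X t) = (s * (1 - t))%:E)%E) /\
  measurable_fun ((`[0, 1] : set R) `*` (setT : set T)) (fun p : R * T => X p.1 p.2).

Definition fdd_event (X : R -> T -> R) (ts : seq R) (A : nat -> set R) : set T :=
  [set w | forall i, (i < size ts)%N -> A i (X (nth 0 ts i) w)].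

Definition independent_processes (X Y : R -> T -> R) : Prop :=
  forall (ts us : seq R) (A B : nat -> set R),
    (forall i, (i < size ts)%N -> nth 0 ts i \in `[0, 1]) ->
    (forall i, (i < size us)%N -> nth 0 us i \in `[0, 1]) ->
    (forall i, measurable (A i)) -> (forall i, measurable (B i)) ->
    P (fdd_event X ts A `&` fdd_event Y us B) =
      (P (fdd_event X ts A) * P (fdd_event Y us B))%E.

Definition avg_radius_gyration (X : R -> T -> R) (mu : R -> R) : \bar R :=
  (2%:E * \int[P]_w (\int[lebesgue_measure]_(t in (`[0%R, 1%R] : set R)) ((X t w) ^+ 2 * mu t)%:E))%E.

End defs.

Definition pdf_on_unit {R : realType} (mu : R -> R) : Prop :=
  measurable_fun setT mu /\ (forall t, 0 <= mu t) /\
  (forall t, t \notin `[0, 1] -> mu t = 0) /\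
  (\int[lebesgue_measure]_(t in setT) (mu t)%:E = 1)%E.

Definition prim {R : realType} (f : R -> R) (t : R) : R :=
  Rintegral lebesgue_measure `[0, t] f.

(* Main.v *)
Require Import Defs.
Set Warnings "-notation-overridden,-ambiguous-paths,-notation-incompatible-prefix".
From HB Require Import structures.
From mathcomp Require Import all_boot all_order all_algebra.
From mathcomp Require Import all_classical all_reals all_analysis.
From mathcomp Require Import measurable_realfun unstable beta_distribution.
Import Order.TTheory GRing.Theory Num.Theory.
Import numFieldNormedType.Exports.
From mathcomp Require Import ring.
Local Open Scope classical_set_scope.
Local Open Scope ring_scope.
Section S.
Context {R : realType}.
Notation leb := (@lebesgue_measure R).
Lemma patch_itv (f : R -> \bar R) (a b x : R) :
  (f \_ `[a, b]) x = if (a <= x <= b)%R then f x else 0%E.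
Proof.
rewrite /patch. rewrite mem_setE in_itv /=. done.
Qed.

Lemma patch_itvR (f : R -> R) (a b x : R) :
  (f \_ `[a, b]) x = if (a <= x <= b)%R then f x else 0%R.
Proof.
rewrite /patch. rewrite mem_setE in_itv /=. done.
Qed.

Local Open Scope ereal_scope.
Goal forall (a : R -> R), measurable_fun (`[0%R,1%R] : set R) a -> measurable_fun setT (a \_ (`[0%R,1%R] : set R)).
move=> a ma. exact: (measurable_restrictT _ (measurable_itv _)).1.
Qed.

Lemma mS : measurable [set p : R * R | (p.2 <= p.1)%R].
Proof.
have := @measurable_fun_ler _ _ R setT snd fst measurable_snd measurable_fst measurableT [set true] I.
by rewrite setTI.
Qed.

Lemma sub01 (a b : R) : (0 <= a)%R -> (b <= 1)%R -> (`[a, b] : set R) `<=` `[0%R, 1%R].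
Proof. by move=> a0 b1 x /=; rewrite !in_itv /= => /andP[ax xb]; rewrite (le_trans a0 ax) (le_trans xb b1). Qed.

Lemma fub (a b : R -> R) :
  measurable_fun (`[0%R, 1%R] : set R) a -> measurable_fun (`[0%R, 1%R] : set R) b ->
  (forall x, (0 <= x <= 1)%R -> (0 <= a x)%R) -> (forall x, (0 <= x <= 1)%R -> (0 <= b x)%R) ->
  \int[leb]_(v in `[0%R, 1%R]) ((a v)%:E * \int[leb]_(u in `[0%R, v]) (b u)%:E) =
  \int[leb]_(u in `[0%R, 1%R]) ((b u)%:E * \int[leb]_(v in `[u, 1%R]) (a v)%:E).
Proof.
move=> ma mb a0 b0.
pose A := a \_ (`[0%R, 1%R] : set R).
pose B := b \_ (`[0%R, 1%R] : set R).
have mA : measurable_fun setT A by exact: (measurable_restrictT _ (measurable_itv _)).1.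
have mB : measurable_fun setT B by exact: (measurable_restrictT _ (measurable_itv _)).1.
have A0 x : (0 <= A x)%R by rewrite /A patch_itvR; case: ifP => // /a0.
have B0 x : (0 <= B x)%R by rewrite /B patch_itvR; case: ifP => // /b0.
pose S := [set p : R * R | (p.2 <= p.1)%R].
pose f := fun p : R * R => (A p.1 * B p.2 * \1_S p)%:E.
have mf : measurable_fun setT f.
  apply/measurable_EFinP; apply: measurable_funM; last exact: measurable_indic mS.
  apply: measurable_funM.
    exact: measurableT_comp mA measurable_fst.
  exact: measurableT_comp mB measurable_snd.
have f0 p : 0 <= f p by rewrite lee_fin !mulr_ge0.
have := fubini_tonelli (m1:=leb) (m2:=leb) f mf f0.
move=> FT.
have Sin p : (p \in S) = (p.2 <= p.1)%R.
  by apply/idP/idP => [/set_mem//|h]; apply: mem_set.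
have mpb (v : R) : (v <= 1)%R -> measurable_fun setT ((fun u => (b u)%:E) \_ (`[0%R, v] : set R)).
  move=> v1; apply: (measurable_restrictT _ (measurable_itv _)).1.
  apply/measurable_EFinP.
  by apply: measurable_funS mb => //; apply: sub01.
have mpa (u : R) : (0 <= u)%R -> measurable_fun setT ((fun v => (a v)%:E) \_ (`[u, 1%R] : set R)).
  move=> u0; apply: (measurable_restrictT _ (measurable_itv _)).1.
  apply/measurable_EFinP.
  by apply: measurable_funS ma => //; apply: sub01.
transitivity (\int[leb]_x \int[leb]_y f (x, y)).
  rewrite integral_mkcond; apply: eq_integral => v _; rewrite patch_itv.
  case: ifP => v01; last first.
    apply/esym; under eq_integral => y _ do rewrite /f /= /A patch_itvR v01 !mul0r.
    by rewrite integral0.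
  have h1 : forall y, [set: R] y -> 0 <= ((fun u => (b u)%:E) \_ (`[0%R, v] : set R)) y.
    move=> y _; rewrite patch_itv; have /andP[v0 v1] := v01.
    by case: (boolP (0 <= y <= v)%R) => // /andP[y0 yv]; rewrite lee_fin b0 // y0 (le_trans yv).
  have h2 := mpb v (proj2 (andP v01)).
  have h3 : (0 <= a v)%R by apply: a0.
  rewrite integral_mkcond -ge0_integralZl_EFin //.
  apply: eq_integral => u _; rewrite /f /A /B /S /= !patch_itv !patch_itvR v01 indicE Sin /=.
  case/andP: v01 => v0 v1.
  case: (lerP 0 u) => u0 /=; case: (lerP u v) => uv /=; rewrite ?mule0 ?mulr0 ?mul0r ?andbF //.
  by rewrite (le_trans uv v1) mulr1 EFinM.
apply: eq_trans FT _.
apply/esym; rewrite integral_mkcond; apply: eq_integral => u _; rewrite patch_itv.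
case: ifP => u01; last first.
  under eq_integral => y _ do rewrite /f /= /B patch_itvR u01 !mulr0 mul0r.
  by rewrite integral0.
have h1 : forall y, [set: R] y -> 0 <= ((fun v => (a v)%:E) \_ (`[u, 1%R] : set R)) y.
  move=> y _; rewrite patch_itv; have /andP[u0 u1] := u01.
  by case: (boolP (u <= y <= 1)%R) => // /andP[uy y1]; rewrite lee_fin a0 // y1 andbT (le_trans u0 uy).
have h2 := mpa u (proj1 (andP u01)).
have h3 : (0 <= b u)%R by apply: b0.
rewrite integral_mkcond -ge0_integralZl_EFin //.
apply: eq_integral => v _; rewrite /f /A /B /S /= !patch_itv !patch_itvR u01 indicE Sin /=.
case/andP: u01 => u0 u1.
case: (lerP u v) => uv /=; case: (lerP v 1) => v1 /=; rewrite ?mule0 ?mulr0 ?mul0r ?andbF ?andbT //.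
by rewrite (le_trans u0 uv) mulr1 EFinM muleC.
all: by rewrite ?mul0r ?mulr0. Qed.
End S.
Section S2.
Context {R : realType}.
Notation leb := (@lebesgue_measure R).
Local Open Scope ereal_scope.

Lemma leb_itv (a b : R) : (a <= b)%R -> leb `[a, b] = (b - a)%:E.
Proof.
move=> ab; rewrite (lebesgue_measure_itv `[a, b]) /= lte_fin.
case: ltP => h; first by rewrite EFinB.
have hab : a = b by apply/eqP; rewrite eq_le ab h.
by rewrite hab subrr.
Qed.

Lemma int_one (u : R) : (u <= 1)%R -> \int[leb]_(v in `[u, 1%R]) (1%R)%:E = (1 - u)%:E.
Proof.
move=> u1; have := integral_cst leb (measurable_itv `[u, 1%R]) 1%:E.
rewrite /cst => ->; rewrite mul1e.
exact: leb_itv.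
Qed.

Lemma poly_int (u : R) : (0 <= u <= 1)%R ->
  \int[leb]_(v in `[u, 1%R]) ((1 - v)%R)%:E = (((1 - u) ^+ 2) / 2)%:E.
Proof.
case/andP => u0; rewrite le_eqVlt => /predU1P[->|u1].
  by rewrite set_itv1 integral_set1 subrr expr0n /= mul0r.
rewrite (@continuous_FTC2 _ _ (fun x : R => (x.~ ^+ 2 * (- 2%:R)^-1)%R))//=.
- rewrite onem1 expr0n /= mul0r add0e; congr (_%:E).
  by rewrite invrN mulrN opprK.
- apply: continuous_in_subspaceT => x _.
  by apply: (@cvgB _ R^o); [exact: cvg_cst|exact: cvg_id].
- split.
  + by move=> y _; apply: derivableM => //=; exact: onemXn_derivable.
  + apply: cvgM; last exact: cvg_cst.
    apply: cvg_at_right_filter; apply: (@cvg_comp _ _ _ onem (fun x : R => (x ^+ 2)%R)).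
      by apply: cvgB; [exact: cvg_cst|exact: cvg_id].
    exact: exprn_continuous.
  + apply: cvg_at_left_filter; apply: cvgM; last exact: cvg_cst.
    apply: (@cvg_comp _ _ _ onem (fun x : R => (x ^+ 2)%R)).
      by apply: cvgB; [exact: cvg_cst|exact: cvg_id].
    exact: exprn_continuous.
- move=> x _; rewrite derive1Mr//.
  by rewrite derive_onemXn mulrAC divff ?mul1r ?expr1 // oppr_eq0 pnatr_eq0.
Qed.
End S2.
Section S3.
Context {R : realType}.
Notation leb := (@lebesgue_measure R).
Local Open Scope ereal_scope.

Lemma primG (f : R -> R) :
  measurable_fun (`[0%R,1%R] : set R) f -> (forall x, (0 <= x <= 1)%R -> (0 <= f x)%R) ->
  \int[leb]_(x in `[0%R,1%R]) (f x)%:E <= 1 ->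
  [/\ forall t, (t <= 1)%R -> (prim f t)%:E = \int[leb]_(x in `[0%R,t]) (f x)%:E,
      forall t, (t <= 1)%R -> (0 <= prim f t <= 1)%R &
      measurable_fun (`[0%R,1%R] : set R) (prim f)].
Proof.
move=> mf f0 f1.
pose I t := \int[leb]_(x in `[0%R,t]) (f x)%:E.
have I0 t : (t <= 1)%R -> 0 <= I t.
  move=> t1; apply: integral_ge0 => x /=; rewrite in_itv /= => /andP[x0 xt].
  by rewrite lee_fin f0 // x0 (le_trans xt t1).
have Ile s t : (s <= t)%R -> (t <= 1)%R -> I s <= I t.
  move=> st t1; apply: ge0_subset_integral => //.
  - apply/measurable_EFinP; apply: measurable_funS mf => //; exact: sub01.
  - move=> x /=; rewrite in_itv /= => /andP[x0 xt].
    by rewrite lee_fin f0 // x0 (le_trans xt t1).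
  - by move=> x /=; rewrite !in_itv /= => /andP[x0 xs]; rewrite x0 (le_trans xs st).
have I1 t : (t <= 1)%R -> I t <= 1.
  by move=> t1; exact: le_trans (Ile t 1%R t1 (lexx _)) f1.
have E t : (t <= 1)%R -> (prim f t)%:E = I t.
  move=> t1; rewrite /prim /Rintegral fineK // ge0_fin_numE ?I0 //.
  exact: le_lt_trans (I1 t t1) (ltry _).
split.
- exact E.
- by move=> t t1; rewrite -!lee_fin E // I0 // I1.
- pose g t := prim f (Order.min t 1%R).
  have nd : {homo g : n m / (n <= m)%R}.
    move=> s t st; rewrite -lee_fin /g !E ?ge_min ?lexx ?orbT //.
    by apply: Ile; [apply: le_min2 | rewrite ge_min lexx orbT].
  apply: (eq_measurable_fun g); last exact: nondecreasing_measurable.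
  move=> x; rewrite inE /= in_itv /= => /andP[_ x1].
  by rewrite /g (min_idPl x1).
Qed.
End S3.
Section S4.
Context {R : realType}.
Notation leb := (@lebesgue_measure R).
Local Open Scope ereal_scope.

Lemma det (mu : R -> R) : pdf_on_unit mu ->
  2%:E * \int[leb]_(u in `[0%R, 1%R]) (mu u * (u * (1 - u)))%:E =
  ((2 * prim (prim mu) 1 - 4 * prim (prim (prim mu)) 1)%R)%:E.
Proof.
case=> mmu [mu0 [muout mu1]].
have mmu' : measurable_fun (`[0%R,1%R] : set R) mu by exact: measurable_funS mmu.
have mu0' : forall x, (0 <= x <= 1)%R -> (0 <= mu x)%R by move=> x _; exact: mu0.
have [E0 B0 m0] : [/\ forall t, (t <= 1)%R -> (prim mu t)%:E = \int[leb]_(x in `[0%R,t]) (mu x)%:E,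
      forall t, (t <= 1)%R -> (0 <= prim mu t <= 1)%R &
      measurable_fun (`[0%R,1%R] : set R) (prim mu)].
  apply: primG => //; rewrite -mu1; apply: ge0_subset_integral => //.
  - by apply/measurable_EFinP.
  - by move=> x _; rewrite lee_fin.
set M0 := prim mu in E0 B0 m0 *.
have M00 : forall x, (0 <= x <= 1)%R -> (0 <= M0 x)%R by move=> x /andP[_ /B0 /andP[]].
have [E1 B1 m1] : [/\ forall t, (t <= 1)%R -> (prim M0 t)%:E = \int[leb]_(x in `[0%R,t]) (M0 x)%:E,
      forall t, (t <= 1)%R -> (0 <= prim M0 t <= 1)%R &
      measurable_fun (`[0%R,1%R] : set R) (prim M0)].
  apply: primG => //.
  apply: (@le_trans _ _ (\int[leb]_(v in `[0%R,1%R]) (1%R)%:E)); last first.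
    by rewrite int_one // subr0.
  apply: ge0_le_integral => //.
  - by apply/measurable_EFinP.
  - by move=> x /=; rewrite in_itv /= => /andP[_ /B0 /andP[_]]; rewrite lee_fin.
set M1 := prim M0 in E1 B1 m1 *.
have M10 : forall x, (0 <= x <= 1)%R -> (0 <= M1 x)%R by move=> x /andP[_ /B1 /andP[]].
have [E2 B2 m2] : [/\ forall t, (t <= 1)%R -> (prim M1 t)%:E = \int[leb]_(x in `[0%R,t]) (M1 x)%:E,
      forall t, (t <= 1)%R -> (0 <= prim M1 t <= 1)%R &
      measurable_fun (`[0%R,1%R] : set R) (prim M1)].
  apply: primG => //.
  apply: (@le_trans _ _ (\int[leb]_(v in `[0%R,1%R]) (1%R)%:E)); last first.
    by rewrite int_one // subr0.
  apply: ge0_le_integral => //.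
  - by apply/measurable_EFinP.
  - by move=> x /=; rewrite in_itv /= => /andP[_ /B1 /andP[_]]; rewrite lee_fin.
set M2 := prim M1 in E2 B2 m2 *.
have mone : measurable_fun (`[0%R,1%R] : set R) (fun _ : R => (1%R : R)) by exact: measurable_cst.
have F1 : (M1 1%R)%:E = \int[leb]_(u in `[0%R, 1%R]) (mu u * (1 - u))%:E.
  rewrite E1 //.
  transitivity (\int[leb]_(v in `[0%R,1%R]) ((1%R)%:E * \int[leb]_(u in `[0%R,v]) (mu u)%:E)).
    by apply: eq_integral => v; rewrite inE /= in_itv /= => /andP[_ v1]; rewrite mul1e E0.
  have := fub _ _ mone mmu' (fun _ _ => ler01) mu0'; rewrite /= => ->.
  by apply: eq_integral => u; rewrite inE /= in_itv /= => /andP[_ u1]; rewrite int_one // EFinM.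
have mlin : measurable_fun (`[0%R,1%R] : set R) (fun v : R => 1 - v)%R.
  by apply: measurable_funB => //; exact: measurable_id.
have F2 : (M2 1%R)%:E = \int[leb]_(u in `[0%R, 1%R]) (mu u * ((1 - u) ^+ 2 / 2))%:E.
  rewrite E2 //.
  transitivity (\int[leb]_(v in `[0%R,1%R]) ((1%R)%:E * \int[leb]_(u in `[0%R,v]) (M0 u)%:E)).
    by apply: eq_integral => v; rewrite inE /= in_itv /= => /andP[_ v1]; rewrite mul1e E1.
  have := fub _ _ mone m0 (fun _ _ => ler01) M00; rewrite /= => ->.
  transitivity (\int[leb]_(v in `[0%R,1%R]) (((1 - v)%R)%:E * \int[leb]_(u in `[0%R,v]) (mu u)%:E)).
    by apply: eq_integral => v; rewrite inE /= in_itv /= => /andP[_ v1]; rewrite int_one // -E0 // muleC.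
  have lin0 : forall x : R, (0 <= x <= 1)%R -> (0 <= 1 - x)%R by move=> x /andP[_ x1]; rewrite subr_ge0.
  have := fub _ _ mlin mmu' lin0 mu0'; rewrite /= => ->.
  by apply: eq_integral => u; rewrite inE /= => u01; rewrite poly_int // EFinM.
pose g1 u := (mu u * (1 - u))%R.
pose g2 u := (mu u * (u * (1 - u)))%R.
pose g3 u := (mu u * ((1 - u) ^+ 2 / 2))%R.
have mg1 : measurable_fun (`[0%R,1%R] : set R) (fun u => (g1 u)%:E).
  by apply/measurable_EFinP; apply: measurable_funM.
have mg2 : measurable_fun (`[0%R,1%R] : set R) (fun u => (g2 u)%:E).
  apply/measurable_EFinP; apply: measurable_funM => //.
  by apply: measurable_funM => //; exact: measurable_id.
have mg3 : measurable_fun (`[0%R,1%R] : set R) (fun u => (g3 u)%:E).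
  apply/measurable_EFinP; apply: measurable_funM => //.
  by apply: measurable_funM => //; exact: measurable_funX.
have g10 : forall x : R, [set` `[0%R, 1%R]] x -> 0 <= (g1 x)%:E.
  by move=> x /=; rewrite in_itv /= => /andP[x0 x1]; rewrite lee_fin mulr_ge0 ?mu0 ?subr_ge0.
have g20 : forall x : R, [set` `[0%R, 1%R]] x -> 0 <= (g2 x)%:E.
  by move=> x /=; rewrite in_itv /= => /andP[x0 x1]; rewrite lee_fin !mulr_ge0 ?mu0 ?subr_ge0.
have g30 : forall x : R, [set` `[0%R, 1%R]] x -> 0 <= (g3 x)%:E.
  by move=> x /=; rewrite in_itv /= => /andP[x0 x1]; rewrite lee_fin !mulr_ge0 ?mu0 ?exprn_ge0 ?subr_ge0 ?invr_ge0.
have key : (2 * M1 1%R)%:E = 2%:E * \int[leb]_(u in `[0%R, 1%R]) (g2 u)%:E + (4 * M2 1%R)%:E.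
  rewrite !EFinM F1 F2.
  rewrite -(@ge0_integralZl_EFin _ _ _ leb _ (measurable_itv _) _ g10 mg1 2%R) //.
  rewrite -(@ge0_integralZl_EFin _ _ _ leb _ (measurable_itv _) _ g30 mg3 4%R) //.
  rewrite -(@ge0_integralZl_EFin _ _ _ leb _ (measurable_itv _) _ g20 mg2 2%R) //.
  rewrite -ge0_integralD //; first last.
  all: try by move=> x Dx; apply: mule_ge0; [rewrite lee_fin ler0n| first [exact: g10 Dx | exact: g20 Dx | exact: g30 Dx]].
  all: try by apply: emeasurable_funM => //; exact: measurable_cst.
  apply: eq_integral => u _; rewrite -!EFinM -EFinD; congr (_%:E).
  by rewrite /g1 /g2 /g3; field.
rewrite EFinB key addeK //.
Qed.
End S4.

Theorem theorem1 (d : measure_display) (T : measurableType d) (R : realType)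
  (P : probability T R) (X Y : R -> T -> R) (mu : R -> R) :
  brownian_bridge P X -> brownian_bridge P Y -> independent_processes P X Y ->
  pdf_on_unit mu ->
  let M0 := prim mu in
  let M1 := prim M0 in
  let M2 := prim M1 in
  avg_radius_gyration P X mu = (2 * M1 1 - 4 * M2 1)%:E.
Proof.
move=> [_ [_ [_ [EX [CX mX]]]]] _ _ pdf M0 M1 M2.
transitivity (2%:E * \int[@lebesgue_measure R]_(u in `[0%R,1%R]) (mu u * (u * (1 - u)))%:E)%E; last first.
  exact: det pdf.
have [mmu [mu0 _]] := pdf.
rewrite /avg_radius_gyration; congr (_ * _)%E.
pose D := ((`[0%R, 1%R] : set R) `*` (setT : set T)).
have mD : measurable D by apply: measurableX => //; exact: measurable_itv.
pose F (p : R * T) := ((fun q : R * T => ((X q.1 q.2) ^+ 2 * mu q.1)%:E) \_ D) p.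
have Fin x w : F (x, w) = if (0 <= x <= 1) then ((X x w) ^+ 2 * mu x)%:E else 0%E.
  by rewrite /F /patch in_setX in_setT andbT /= mem_setE in_itv.
have mF : measurable_fun setT F.
  apply: (measurable_restrictT _ mD).1.
  apply/measurable_EFinP; apply: measurable_funM.
    exact: measurable_funX.
  by apply: measurable_funS (measurableT_comp mmu measurable_fst).
have F0 p : (0 <= F p)%E.
  by case: p => x w; rewrite Fin; case: ifP => // _; rewrite lee_fin mulr_ge0 ?sqr_ge0.
have FT := fubini_tonelli (m1:=@lebesgue_measure R) (m2:=P) F mF F0.
have V x : x \in `[0%R, 1%R] -> (\int[P]_w ((X x w) ^+ 2)%:E = (x * (1 - x))%:E)%E.
  move=> hx; rewrite -(CX x x hx hx (lexx x)) covariance.unlock (EX x hx) /= expectation.unlock.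
  apply: eq_integral => w _; congr EFin.
  have -> : ((X x \- cst 0) * (X x \- cst 0)) w = (X x w - 0) * (X x w - 0) by [].
  by rewrite subr0 expr2.
have mXx x : x \in `[0%R, 1%R] -> measurable_fun setT (X x).
  move=> hx.
  have := @measurable_comp _ _ _ _ _ _ D (fun p : R * T => X p.1 p.2) setT (fun y => (x, y)) mD.
  apply => //.
    by move=> _ [y _ <-]; split.
  by apply: measurable_fun_pair => //; exact: measurable_cst.
transitivity (\int[P]_y \int[@lebesgue_measure R]_x F (x, y))%E.
  apply: eq_integral => w _; rewrite integral_mkcond; apply: eq_integral => x _.
  by rewrite Fin patch_itv.
rewrite -FT.
rewrite [RHS]integral_mkcond; apply: eq_integral => x _; rewrite patch_itv; case: ifP => x01.
- have hx : x \in `[0%R, 1%R] by rewrite in_itv.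
  under eq_integral => y _ do rewrite Fin x01 EFinM muleC.
  rewrite ge0_integralZl_EFin //.
  + by rewrite V // EFinM.
  + by move=> y _; rewrite lee_fin sqr_ge0.
  + by apply/measurable_EFinP; apply: measurable_funX; exact: mXx.
- under eq_integral => y _ do rewrite Fin x01.
  by rewrite integral0.
Qed.
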